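(* Let $r\ge 0$ and $\ell\ge 1$ be integers, let $G$ be a graph, and let $H$ be an $r$-shallow minor of $G\boxtimes K_\ell$. Then for every integer $s\ge 1$, $$\mathrm{scol}_s(H)\le \ell\,\mathrm{scol}_{2rs+2r+s}(G)\quad\text{and}\quad \mathrm{wcol}_s(H)\le \ell\,\mathrm{wcol}_{2rs+2r+s}(G).$$
   Context: Graphs are finite, simple, undirected. The strong product $G\boxtimes K_\ell$ has vertex set $V(G)\times[\ell]$ with distinct $(a,i),(b,j)$ adjacent iff $a=b$ or $ab\in E(G)$. A model of $H$ in $G'$ assigns to each $v\in V(H)$ a connected subgraph $\mu(v)$ of $G'$, pairwise vertex-disjoint, such that each edge $vw\in E(H)$ has an edge of $G'$ between $\mu(v)$ and $\mu(w)$; $H$ is an $r$-shallow minor of $G'$ if some model has all $\mu(v)$ of radius at most $r$. For a graph $G$, a total order $\preceq$ of $V(G)$, a vertex $v$ and an integer $s\ge1$: $R(G,\preceq,v,s)$ is the set of vertices $w$ for which there is a path $v=w_0,w_1,\dots,w_{s'}=w$ with $0\le s'\le s$, $w\preceq v$, and $v\prec w_i$ for all $i\in[s'-1]$; $Q(G,\preceq,v,s)$ is the set of vertices $w$ for which there is such a path with $w\preceq v$ and $w\prec w_i$ for all $i\in[s'-1]$. The $s$-strong colouring number $\mathrm{scol}_s(G)$ (resp. $s$-weak colouring number $\mathrm{wcol}_s(G)$) is the minimum over total orders $\preceq$ of $\max_v|R(G,\preceq,v,s)|$ (resp. $\max_v|Q(G,\preceq,v,s)|$). *)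

(* Defs.v *)
From mathcomp Require Import all_boot.
Set Implicit Arguments. Unset Strict Implicit. Unset Printing Implicit Defensive.

(* A (finite, simple, undirected) graph is a finType of vertices together with
   a symmetric irreflexive boolean adjacency relation; symmetry and
   irreflexivity are assumed as hypotheses in the theorem. *)

Definition strong_prod (T : finType) (e : rel T) (l : nat) : rel (T * 'I_l) :=
  fun x y => (x != y) && ((x.1 == y.1) || e x.1 y.1).
Arguments strong_prod {T} e l.

Definition radius_le (V : finType) (e : rel V) (A : {set V}) (r : nat) : Prop :=
  exists2 c, c \in A &
    forall x, x \in A -> exists p : seq V,
      [/\ path e c p, all (fun y => y \in A) p, last c p = x & size p <= r].

Definition shallow_minor (r : nat) (U V : finType) (eH : rel U) (e : rel V) : Prop :=
  exists mu : U -> {set V},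
    [/\ forall u, radius_le e (mu u) r,
        forall u w, u != w -> [disjoint mu u & mu w] &
        forall u w, eH u w -> exists2 a, a \in mu u & exists2 b, b \in mu w & e a b].

(* Total orders of V are represented by bijective ranks f : V -> 'I_#|V|,
   with w ⪯ v iff f w <= f v. *)
Definition is_order (V : finType) (f : {ffun V -> 'I_#|V|}) : bool := injectiveb f.

(* Paths v = w_0, w_1, ..., w_{s'} = w with s' <= s; p = [w_1; ...; w_{s'}],
   internal vertices are take s'.-1 p. *)
Definition Rset (V : finType) (e : rel V) (f : {ffun V -> 'I_#|V|}) (v : V) (s : nat)
  : {set V} :=
  [set w | [exists n : 'I_s.+1, [exists p : n.-tuple V,
     [&& path e v p, uniq (v :: p), last v p == w, f w <= f v &
         all (fun x => f v < f x) (take n.-1 p)]]]].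

Definition Qset (V : finType) (e : rel V) (f : {ffun V -> 'I_#|V|}) (v : V) (s : nat)
  : {set V} :=
  [set w | [exists n : 'I_s.+1, [exists p : n.-tuple V,
     [&& path e v p, uniq (v :: p), last v p == w, f w <= f v &
         all (fun x => f w < f x) (take n.-1 p)]]]].

Definition scol_ord (V : finType) (e : rel V) (f : {ffun V -> 'I_#|V|}) (s : nat) : nat :=
  \max_(v : V) #|Rset e f v s|.
Definition wcol_ord (V : finType) (e : rel V) (f : {ffun V -> 'I_#|V|}) (s : nat) : nat :=
  \max_(v : V) #|Qset e f v s|.

(* minimum over all total orders; #|V| is an upper bound of every value, so it
   is a neutral starting point for the minimum (and there is always at least
   one order). *)
Definition scol (V : finType) (e : rel V) (s : nat) : nat :=
  \big[minn/#|V|]_(f : {ffun V -> 'I_#|V|} | is_order f) scol_ord e f s.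
Definition wcol (V : finType) (e : rel V) (s : nat) : nat :=
  \big[minn/#|V|]_(f : {ffun V -> 'I_#|V|} | is_order f) wcol_ord e f s.

(* Main.v *)
Require Import Defs.
From mathcomp Require Import all_boot zify.
Set Implicit Arguments. Unset Strict Implicit. Unset Printing Implicit Defensive.

Definition reflc (V : eqType) (e : rel V) : rel V := fun a b => (a == b) || e a b.

Lemma path_reflc_uniq (V : eqType) (e : rel V) a p :
  path (reflc e) a p -> uniq (a :: p) -> path e a p.
Proof.
elim: p a => //= b p IH a /andP[hab hp] /andP[ha hu].
rewrite IH // andbT; move: hab ha; rewrite /reflc; case: eqP => // ->.
by rewrite inE eqxx.
Qed.

Lemma take_notlast (V : eqType) a (p : seq V) y :
  uniq (a :: p) -> y \in take (size p).-1 p -> (y != last a p) && (y != a).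
Proof.
case/lastP: p => [|p z] //= /andP[ha hu].
rewrite size_rcons /= -cats1 take_size_cat // => yp.
rewrite last_cat /=; rewrite rcons_uniq in hu.
case/andP: hu => hz _; apply/andP; split.
  by apply: contraNneq hz => <-.
by apply: contraNneq ha => <-; rewrite mem_rcons inE yp orbT.
Qed.

Lemma shorten_gen (V : eqType) (e : rel V) (a x : V) (q : seq V) (g : pred V) :
  path (reflc e) a q -> last a q = x ->
  (forall y, y \in q -> y != x -> y != a -> g y) ->
  exists p', [/\ path e a p', uniq (a :: p'), last a p' = x, size p' <= size q &
                all g (take (size p').-1 p')].
Proof.
move=> hp hl hg; case: (shortenP hp) hl => p' hp' hu hsub hl.
exists p'; split => //.
- exact: path_reflc_uniq.
- by apply: uniq_leq_size => //; case/andP: hu.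
apply/allP => y hy; have /andP[h1 h2] := take_notlast hu hy.
apply: hg => //; last by rewrite -hl.
by apply: hsub; apply: mem_take hy.
Qed.

Lemma inR (V : finType) (e : rel V) (f : {ffun V -> 'I_#|V|}) a x (p' : seq V) k :
  path e a p' -> uniq (a :: p') -> last a p' = x -> size p' <= k -> f x <= f a ->
  all (fun y => f a < f y) (take (size p').-1 p') -> x \in Rset e f a k.
Proof.
move=> h1 h2 h3 h4 h5 h6; rewrite inE; apply/existsP.
have hn : size p' < k.+1 by [].
exists (Ordinal hn); apply/existsP; exists (in_tuple p') => /=.
by rewrite h1 -[_ && uniq _]/(uniq (a :: p')) h2 h3 eqxx h5 h6.
Qed.

Lemma inQ (V : finType) (e : rel V) (f : {ffun V -> 'I_#|V|}) a x (p' : seq V) k :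
  path e a p' -> uniq (a :: p') -> last a p' = x -> size p' <= k -> f x <= f a ->
  all (fun y => f x < f y) (take (size p').-1 p') -> x \in Qset e f a k.
Proof.
move=> h1 h2 h3 h4 h5 h6; rewrite inE; apply/existsP.
have hn : size p' < k.+1 by [].
exists (Ordinal hn); apply/existsP; exists (in_tuple p') => /=.
by rewrite h1 -[_ && uniq _]/(uniq (a :: p')) h2 h3 eqxx h5 h6.
Qed.

Lemma walk_R (V : finType) (e : rel V) (f : {ffun V -> 'I_#|V|}) a q k :
  injective f -> path (reflc e) a q -> size q <= k -> f (last a q) <= f a ->
  exists x, x \in Rset e f a k /\ (x = last a q \/ (x \in q /\ f x < f a)).
Proof.
move=> finj hp hs hl.
have [ela|nla] := eqVneq (last a q) a.
  exists a; split; last by left.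
  by apply: (@inR _ _ _ _ _ [::]).
pose P := fun y => (f y <= f a) && (y != a).
have hP : has P q.
  apply/hasP; exists (last a q); last by rewrite /P hl nla.
  by move: (mem_last a q); rewrite inE (negbTE nla).
set i := find P q.
have hi : i < size q by rewrite -has_find.
set x := nth a q i.
have Px : P x by apply: nth_find.
have htk : take i.+1 q = rcons (take i q) x by rewrite (take_nth a).
have hnt : ~~ has P (take i q) by rewrite has_take // ltnn.
have hlast : last a (take i.+1 q) = x by rewrite htk last_rcons.
have hyg : forall y, y \in take i.+1 q -> y != x -> y != a -> f a < f y.
  move=> y; rewrite htk mem_rcons inE => /orP[/eqP ->|hy]; first by rewrite eqxx.
  move=> _ hya; have : ~~ P y by apply: contra hnt => Py; apply/hasP; exists y.
  by rewrite /P hya andbT -ltnNge.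
have [p' [h1 h2 h3 h4 h5]] := @shorten_gen _ e a x (take i.+1 q) (fun y => f a < f y)
   (take_path _ hp) hlast hyg.
exists x; split.
  apply: (inR h1 h2 h3) => //; last by case/andP: Px.
  apply: (leq_trans h4); rewrite size_take_min; exact: leq_trans (geq_minr _ _) hs.
right; split; first by apply: mem_nth.
case/andP: Px; rewrite leq_eqVlt => /orP[/eqP h|//] hxa.
by move/val_inj/finj: h => h; rewrite h eqxx in hxa.
Qed.

Lemma walk_Q (V : finType) (e : rel V) (f : {ffun V -> 'I_#|V|}) a q k :
  injective f -> path (reflc e) a q -> size q <= k -> f (last a q) <= f a ->
  (forall y, y \in q -> f (last a q) <= f y) ->
  last a q \in Qset e f a k.
Proof.
move=> finj hp hs hl hall.
have hyg : forall y, y \in q -> y != last a q -> y != a -> f (last a q) < f y.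
  move=> y hy hyx _; rewrite ltn_neqAle hall // andbT.
  by apply: contra hyx => /eqP h; apply/eqP/finj/val_inj.
have [p' [h1 h2 h3 h4 h5]] := @shorten_gen _ e a (last a q) q (fun y => f (last a q) < f y) hp erefl hyg.
by apply: (inQ h1 h2 h3) => //; apply: leq_trans hs.
Qed.

Lemma sp_sym (T : finType) (eG : rel T) l : symmetric eG -> symmetric (strong_prod eG l).
Proof.
move=> hs x y; rewrite /strong_prod eq_sym hs; congr (_ && (_ || _)).
by rewrite eq_sym.
Qed.

Lemma sp_proj (T : finType) (eG : rel T) l y p :
  path (strong_prod eG l) y p -> path (reflc eG) y.1 (map fst p).
Proof.
elim: p y => //= z p IH y /andP[h1 h2]; rewrite IH // andbT.
by case/andP: h1.
Qed.

Lemma ball (V : finType) (e : rel V) (A : {set V}) r y z :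
  symmetric e -> radius_le e A r -> y \in A -> z \in A ->
  exists p, [/\ path e y p, last y p = z, size p <= r + r & all (fun x => x \in A) p].
Proof.
move=> hs [c hc hall] hy hz.
have [py [py1 py2 py3 py4]] := hall y hy.
have [pz [pz1 pz2 pz3 pz4]] := hall z hz.
pose ry := rev (belast c py).
have hry : path e y ry.
  rewrite -py3 /ry rev_path; have <- // : path e c py = path (fun z => e^~ z) c py.
  by apply: eq_path => a b /=; exact: hs.
have hlry : last y ry = c.
  rewrite -py3 /ry.
  have -> : last (last c py) (rev (belast c py)) = last c (last c py :: rev (belast c py)) by [].
  by rewrite -rev_rcons -lastI rev_cons last_rcons.
exists (ry ++ pz); split.
- by rewrite cat_path hry hlry.
- by rewrite last_cat hlry.
- by rewrite size_cat size_rev size_belast leq_add.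
rewrite all_cat pz2 andbT; apply/allP => x; rewrite mem_rev => /mem_belast.
by rewrite inE => /orP[/eqP ->|]; [| move/(allP py2)].
Qed.

Lemma walkH (U V : finType) (eH : rel U) (e : rel V) (mu : U -> {set V}) r :
  symmetric e -> (forall u, radius_le e (mu u) r) ->
  (forall u w, eH u w -> exists2 a, a \in mu u & exists2 b, b \in mu w & e a b) ->
  forall q v y z, path eH v q -> y \in mu v -> z \in mu (last v q) ->
  exists p, [/\ path e y p, last y p = z, size p <= (r + r) * (size q).+1 + size q &
               all (fun x => has (fun u => x \in mu u) (v :: q)) p].
Proof.
move=> hs hrad hedge; elim=> [|u q IH] v y z /=.
  move=> _ hy hz; have [p [h1 h2 h3 h4]] := ball hs (hrad v) hy hz.
  exists p; split => //; first by rewrite muln1 addn0.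
  by apply/allP => x /(allP h4) /= ->.
case/andP => hvu hq hy hz.
have [a ha [b hb hab]] := hedge _ _ hvu.
have [p1 [h11 h12 h13 h14]] := ball hs (hrad v) hy ha.
have [p2 [h21 h22 h23 h24]] := IH u b z hq hb hz.
exists (p1 ++ b :: p2); split.
- by rewrite cat_path h11 h12 /= hab.
- by rewrite last_cat h12.
- rewrite size_cat /= mulnS; move: h13 h23; set R := (r + r) * _; lia.
rewrite all_cat /=; apply/and3P; split.
- by apply/allP => x /(allP h14) ->.
- by rewrite hb orbT.
by apply/allP => x /(allP h24) /= /orP[->|->]; rewrite ?orbT.
Qed.

Lemma count_inj (U T : finType) l (mu : U -> {set T * 'I_l}) (A : {set U}) (B : {set T}) :
  (forall u w, u != w -> [disjoint mu u & mu w]) ->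
  (forall w, w \in A -> exists y, (y \in mu w) && (y.1 \in B)) ->
  #|A| <= #|B| * l.
Proof.
move=> hd hA.
pose g w := [pick y | (y \in mu w) && (y.1 \in B)].
have gS : forall w, w \in A -> exists2 y, g w = Some y & (y \in mu w) && (y.1 \in B).
  move=> w /hA [y hy]; rewrite /g; case: pickP => [y' hy'|/(_ y)]; last by rewrite hy.
  by exists y'.
have ginj : {in A &, injective g}.
  move=> u w hu hw; have [y hy /andP[hy1 _]] := gS u hu; have [y' hy' /andP[hy1' _]] := gS w hw.
  rewrite hy hy' => -[eyy]; apply/eqP; apply: contraT => huw.
  by have := disjointFr (hd _ _ huw) hy1; rewrite eyy hy1'.
rewrite -(card_in_imset ginj).
have -> : #|B| * l = #|[set Some y | y in setX B [set: 'I_l]]|.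
  by rewrite card_imset; [rewrite cardsX cardsT card_ord | move=> ? ? []].
apply: subset_leq_card; apply/subsetP => o /imsetP[w hw ->].
have [y hy /andP[_ hy2]] := gS w hw; rewrite hy; apply/imsetP; exists y => //.
by rewrite !inE hy2.
Qed.

Lemma order_ext (U : finType) (key : U -> nat) :
  exists f' : {ffun U -> 'I_#|U|}, is_order f' /\ forall a b, key a < key b -> f' a < f' b.
Proof.
pose le := fun a b => key a <= key b.
pose s0 := sort le (enum U).
have hsz : size s0 = #|U| by rewrite size_sort cardT.
have hin : forall u, u \in s0 by move=> u; rewrite mem_sort mem_enum.
have hidx : forall u, index u s0 < #|U| by move=> u; rewrite -hsz index_mem.
exists [ffun u => Ordinal (hidx u)]; split.
  apply/injectiveP => a b; rewrite !ffunE => -[h].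
  by rewrite -(nth_index a (hin a)) h nth_index.
move=> a b hab; rewrite !ffunE /=; rewrite ltnNge; apply/negP => hba.
have hsort : sorted le s0 by apply: sort_sorted => x y; exact: leq_total.
have htr : transitive le by move=> x y z; exact: leq_trans.
move: hba; rewrite leq_eqVlt => /orP[/eqP h|h].
  have : a = b by rewrite -(nth_index a (hin a)) -h nth_index.
  by move=> eab; rewrite eab ltnn in hab.
have := sorted_ltn_nth htr a hsort; move/(_ (index b s0) (index a s0)).
rewrite !inE !index_mem !hin !nth_index // => /(_ erefl erefl h).
by rewrite /le leqNgt hab.
Qed.

Lemma mem_take_last (V : eqType) (v u : V) p :
  u \in p -> u \in take (size p).-1 p \/ u = last v p.
Proof.
case/lastP: p => [|p z] //; rewrite mem_rcons inE size_rcons /= -cats1 take_size_cat //.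
by rewrite last_cat /= => /orP[/eqP ->|->]; [right|left].
Qed.

Lemma core (r l : nat) (T U : finType) (eG : rel T) (eH : rel U)
  (mu : U -> {set T * 'I_l}) (f : {ffun T -> 'I_#|T|}) (s : nat) (t0 : T) :
  symmetric eG -> injective f ->
  (forall u, radius_le (strong_prod eG l) (mu u) r) ->
  (forall u w, u != w -> [disjoint mu u & mu w]) ->
  (forall u w, eH u w -> exists2 a, a \in mu u & exists2 b, b \in mu w & strong_prod eG l a b) ->
  exists f' : {ffun U -> 'I_#|U|}, is_order f' /\
     scol_ord eH f' s <= scol_ord eG f (2 * r * s + 2 * r + s) * l /\
     wcol_ord eH f' s <= wcol_ord eG f (2 * r * s + 2 * r + s) * l.
Proof.
move=> hsG finj hrad hdisj hedge.
set k := 2 * r * s + 2 * r + s.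
pose pi u := [set y.1 | y in mu u].
pose m u := odflt t0 [pick x in pi u | [forall y in pi u, f x <= f y]].
have hm : forall u, (exists2 y, y \in mu u & y.1 = m u) /\
                    (forall y, y \in mu u -> f (m u) <= f y.1).
  move=> u; have [c hc _] := hrad u.
  have hc1 : c.1 \in pi u by apply/imsetP; exists c.
  case: (arg_minnP (fun x => f x) hc1) => x hx hxmin.
  rewrite /m; case: pickP => [x' /andP[hx' /forallP hx'min]|/(_ x)].
    split; first by case/imsetP: hx' => y hy ->; exists y.
    by move=> y hy; have := hx'min y.1; rewrite (imset_f _ hy).
  have hx' : x \in pi u by []. rewrite hx' /=; move/negbT/negP; case; apply/forallP => y; apply/implyP; exact: hxmin.
have [f' [hf'o hmono]] := order_ext (fun u => f (m u)).
have hle : forall a b, f' a <= f' b -> f (m a) <= f (m b).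
  by move=> a b hab; rewrite leqNgt; apply/negP => /hmono; rewrite ltnNge hab.
have hwalk : forall v w (n : nat) (p : seq U), size p = n -> n <= s ->
    path eH v p -> last v p = w ->
    exists qG, [/\ path (reflc eG) (m v) qG, last (m v) qG = m w, size qG <= k &
       forall x, x \in qG -> exists2 u, u \in v :: p & exists2 y, y \in mu u & y.1 = x].
  move=> v w n p hsz hns hp hl.
  have [[y0 hy0 hy0e] _] := hm v.
  have [[z0 hz0 hz0e] _] := hm w.
  have hz0' : z0 \in mu (last v p) by rewrite hl.
  have [p1 [h1 h2 h3 h4]] := walkH (@sp_sym _ _ l hsG) hrad hedge hp hy0 hz0'.
  exists (map fst p1); split.
  - by rewrite -hy0e; apply: sp_proj.
  - by rewrite -hy0e last_map h2 hz0e.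
  - rewrite size_map; apply: (leq_trans h3); rewrite hsz /k.
    have : (r + r) * n.+1 <= (r + r) * s.+1 by rewrite leq_mul2l ltnS hns orbT.
    nia.
  move=> x /mapP [y hy ->]; have := allP h4 y hy => /hasP [u hu hyu].
  by exists u => //; exists y.
exists f'; split; [exact: hf'o|split].
- apply/bigmax_leqP => v _.
  apply: (@leq_trans (#|Rset eG f (m v) k| * l)); last by rewrite leq_mul2r leq_bigmax orbT.
  apply: (count_inj (mu := mu)) => // w; rewrite inE => /existsP [n /existsP [p /and5P [hp huq hl hwv hint]]].
  have hsz : size p = n by rewrite size_tuple.
  have [qG [q1 q2 q3 q4]] := hwalk v w n p hsz (ltn_ord n : n < s.+1) hp (eqP hl).
  have hwv' : f (last (m v) qG) <= f (m v) by rewrite q2; apply: hle.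
  have [x [hx hxc]] := walk_R finj q1 q3 hwv'.
  case: hxc => [hxe|[hxq hxlt]].
    have [[z0 hz0 hz0e] _] := hm w; exists z0; rewrite hz0 /= hz0e -q2 -hxe //.
  have [u hu [y hy hyx]] := q4 x hxq.
  have [euw|huw] := eqVneq u w; first by exists y; rewrite -euw hy /= hyx.
  exfalso; have hmu : f (m u) <= f x by rewrite -hyx; apply: (proj2 (hm u)).
  have : f (m v) <= f (m u).
    move: hu; rewrite inE => /orP[/eqP ->//|hu].
    case: (mem_take_last v hu) => [ht|hlast]; last by rewrite hlast (eqP hl) eqxx in huw.
    apply: hle; apply: ltnW; rewrite hsz in ht; exact: (allP hint _ ht).
  move=> h; have := leq_trans h hmu; by rewrite leqNgt hxlt.
- apply/bigmax_leqP => v _.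
  apply: (@leq_trans (#|Qset eG f (m v) k| * l)); last by rewrite leq_mul2r leq_bigmax orbT.
  apply: (count_inj (mu := mu)) => // w; rewrite inE => /existsP [n /existsP [p /and5P [hp huq hl hwv hint]]].
  have hsz : size p = n by rewrite size_tuple.
  have [qG [q1 q2 q3 q4]] := hwalk v w n p hsz (ltn_ord n : n < s.+1) hp (eqP hl).
  have hwv' : f (last (m v) qG) <= f (m v) by rewrite q2; apply: hle.
  have hall : forall x, x \in qG -> f (last (m v) qG) <= f x.
    move=> x hxq; rewrite q2.
    have [u hu [y hy hyx]] := q4 x hxq.
    have hmu : f (m u) <= f x by rewrite -hyx; apply: (proj2 (hm u)).
    apply: leq_trans hmu.
    move: hu; rewrite inE => /orP[/eqP ->|hu]; first by apply: hle.
    case: (mem_take_last v hu) => [ht|hlast]; last by rewrite hlast (eqP hl).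
    apply: hle; apply: ltnW; rewrite hsz in ht; exact: (allP hint _ ht).
  have hQ := walk_Q finj q1 q3 hwv' hall.
  have [[z0 hz0 hz0e] _] := hm w; exists z0; rewrite hz0 /= hz0e -q2 //.
Qed.

Lemma bigmin_init (I : finType) (P : pred I) (F : I -> nat) x0 :
  \big[minn/x0]_(i | P i) F i <= x0.
Proof. by elim/big_rec: _ => // i y _ hy; rewrite geq_min hy orbT. Qed.

Lemma bigmin_le (I : finType) (P : pred I) (F : I -> nat) x0 i :
  P i -> \big[minn/x0]_(j | P j) F j <= F i.
Proof.
move=> Pi; have : i \in index_enum I by rewrite mem_index_enum.
elim: (index_enum I) => [|j r IH] //; rewrite inE big_cons => /orP[/eqP <-|hi].
  by rewrite Pi geq_minl.
by case: ifP => _; [rewrite geq_min IH ?orbT | apply: IH].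
Qed.

Lemma bigmin_lb (I : finType) (P : pred I) (F : I -> nat) x0 X l :
  X <= l * x0 -> (forall i, P i -> X <= l * F i) ->
  X <= l * \big[minn/x0]_(i | P i) F i.
Proof.
move=> h0 hF; apply: (big_ind (fun m => X <= l * m)) => // a b ha hb.
by rewrite /minn; case: ifP.
Qed.

Theorem theorem18 (r l : nat) (T U : finType) (eG : rel T) (eH : rel U) :
  symmetric eG -> irreflexive eG -> symmetric eH -> irreflexive eH ->
  0 < l ->
  shallow_minor r eH (strong_prod eG l) ->
  forall s : nat, 0 < s ->
    scol eH s <= l * scol eG (2 * r * s + 2 * r + s) /\
    wcol eH s <= l * wcol eG (2 * r * s + 2 * r + s).
Proof.
move=> hsG hiG hsH hiH hl [mu [hrad hdisj hedge]] s hs.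
have cardU : #|U| <= #|T| * l.
  rewrite -cardsT -(cardsT T); apply: (count_inj (mu := mu)) => // w _.
  by have [c hc _] := hrad w; exists c; rewrite hc inE.
have hT0 : forall X, X <= #|U| -> (forall t : T, False) -> forall y, X <= l * y.
  move=> X hX hT y; apply: leq_trans hX _; apply: leq_trans cardU _.
  have -> : #|T| = 0 by apply: eq_card0 => t; case: (hT t).
  by rewrite mul0n.
split.
- apply: bigmin_lb; first by rewrite mulnC; apply: leq_trans (bigmin_init _ _ _) cardU.
  move=> f /injectiveP finj.
  case: (pickP (fun _ : T => true)) => [t0 _|hT]; last first.
    by apply: hT0 (bigmin_init _ _ _) _ _ => t; have := hT t.
  have [f' [hf' [h1 _]]] := core s t0 hsG finj hrad hdisj hedge.
  by rewrite mulnC; apply: leq_trans (bigmin_le _ _ hf') h1.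
- apply: bigmin_lb; first by rewrite mulnC; apply: leq_trans (bigmin_init _ _ _) cardU.
  move=> f /injectiveP finj.
  case: (pickP (fun _ : T => true)) => [t0 _|hT]; last first.
    by apply: hT0 (bigmin_init _ _ _) _ _ => t; have := hT t.
  have [f' [hf' [_ h2]]] := core s t0 hsG finj hrad hdisj hedge.
  by rewrite mulnC; apply: leq_trans (bigmin_le _ _ hf') h2.
Qed.
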